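(* In the single-item all-pay auction with budgets described in the context, let $L=\min\{B_1,B_2,v_1,v_2\}$. Then in any Nash equilibrium $(F_1,F_2)$ we have $\overline{x}_1=\overline{x}_2=L$.
   Context: Single-item all-pay auction with budgets. There are two players $i\in\{1,2\}$; $-i$ denotes the opponent of $i$. Player $i$ has budget $B_i\ge 0$ and valuation $v_i>0$ for a single item. A pure strategy of player $i$ is a bid $x_i\in[0,B_i]$; a mixed strategy is a probability distribution on $[0,B_i]$, described by its cumulative distribution function $F_i$. The player with the higher bid wins the item. Tie-breaking: if $x_1=x_2=\min\{B_1,B_2,v_1,v_2\}$ and $\min\{B_i,v_i\}>\min\{B_{-i},v_{-i}\}$ for some $i$, then player $i$ wins; in all other ties each player wins with probability $\frac12$. Player $i$'s utility is $v_i-x_i$ if he wins and $-x_i$ if he loses. A Nash equilibrium is a pair $(F_1,F_2)$ such that each $F_i$ maximizes player $i$'s expected utility against $F_{-i}$ over all mixed strategies on $[0,B_i]$. $Supp(F_i)$ is the support of $F_i$, $\overline{x}_i=\sup Supp(F_i)$ and $\underline{x}_i=\inf Supp(F_i)$. *)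

(* Defs.v *)
From HB Require Import structures.
From mathcomp Require Import all_boot all_order all_algebra.
From mathcomp Require Import all_classical all_reals all_analysis.
Set Implicit Arguments. Unset Strict Implicit. Unset Printing Implicit Defensive.
Import Order.TTheory GRing.Theory Num.Theory.
Local Open Scope classical_set_scope.
Local Open Scope ring_scope.

Section AllPay.
Variable R : realType.

Definition Lval (B1 B2 v1 v2 : R) : R :=
  Num.min (Num.min B1 B2) (Num.min v1 v2).

(* Realized (tie-expected) payoff of a player with budget B, valuation v,
   own bid x, against an opponent with budget B', valuation v', bid y.
   Ties: if x = y = L and min{B,v} > min{B',v'} this player wins;
   if x = y = L and min{B',v'} > min{B,v} the opponent wins;
   in all other ties each wins with probability 1/2 (expected payoff). *)
Definition payoff (B v B' v' : R) (x y : R) : R :=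
  if y < x then v - x
  else if x < y then - x
  else
    if (x == Lval B B' v v') && (Num.min B' v' < Num.min B v) then v - x
    else if (x == Lval B B' v v') && (Num.min B v < Num.min B' v') then - x
    else v / 2 - x.

(* A mixed strategy on [0, B]: a probability measure on R giving full mass to [0,B]. *)
Definition mixed_on (B : R) (P : probability R R) : Prop :=
  P `[0, B]%classic = 1%E.

Definition exp_util (B v B' v' : R) (P Q : probability R R) : \bar R :=
  (\int[P]_x (\int[Q]_y (payoff B v B' v' x y)%:E))%E.

Definition nash_eq (B1 B2 v1 v2 : R) (F1 F2 : probability R R) : Prop :=
  [/\ mixed_on B1 F1, mixed_on B2 F2,
      (forall G : probability R R, mixed_on B1 G ->
         (exp_util B1 v1 B2 v2 G F2 <= exp_util B1 v1 B2 v2 F1 F2)%E) &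
      (forall G : probability R R, mixed_on B2 G ->
         (exp_util B2 v2 B1 v1 G F1 <= exp_util B2 v2 B1 v1 F2 F1)%E)].

Definition supp (P : probability R R) : set R :=
  [set x : R | forall e : R, 0 < e ->
     (0%E < P [set y : R | (x - e < y < x + e)%R])%E].

End AllPay.

(* Main.v *)
Require Import Defs.
From HB Require Import structures.
From mathcomp Require Import all_boot all_order all_algebra.
From mathcomp Require Import all_classical all_reals all_analysis.
From mathcomp Require Import measurable_realfun.
From mathcomp Require Import ring lra.
Import Order.TTheory GRing.Theory Num.Theory.
Local Open Scope classical_set_scope.
Local Open Scope ring_scope.

Definition pr {R : realType} (P : probability R R) (A : set R) : R := fine (P A).

Lemma prE {R : realType} (P : probability R R) {A : set R} :
  measurable A -> P A = (pr P A)%:E.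
Proof. by move=> mA; rewrite /pr fineK // fin_num_measure. Qed.

Lemma pr_ge0 {R : realType} (P : probability R R) {A : set R} :
  measurable A -> 0 <= pr P A.
Proof. by move=> mA; rewrite -lee_fin -prE. Qed.

Lemma pr_le1 {R : realType} (P : probability R R) {A : set R} :
  measurable A -> pr P A <= 1.
Proof. by move=> mA; rewrite -lee_fin -prE // probability_le1. Qed.

Lemma pr_le {R : realType} (P : probability R R) {A B : set R} :
  measurable A -> measurable B -> A `<=` B -> pr P A <= pr P B.
Proof.
move=> mA mB AB; rewrite -lee_fin -!prE //; apply: le_measure => //; rewrite inE //.
Qed.

Lemma prT {R : realType} (P : probability R R) : pr P setT = 1.
Proof. by rewrite /pr probability_setT. Qed.

Lemma prU {R : realType} (P : probability R R) {A B : set R} :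
  measurable A -> measurable B -> A `&` B = set0 -> pr P (A `|` B) = pr P A + pr P B.
Proof.
move=> mA mB AB; have mU : measurable (A `|` B) by exact: measurableU.
apply: EFin_inj; rewrite EFinD -!prE //; exact: measureU.
Qed.

Lemma prC {R : realType} (P : probability R R) {A : set R} :
  measurable A -> pr P (~` A) = 1 - pr P A.
Proof.
move=> mA; apply: EFin_inj; rewrite EFinB -!prE //; last exact: measurableC.
exact: probability_setC.
Qed.

Lemma mixed_pr {R : realType} {B : R} {P : probability R R} :
  mixed_on B P -> pr P `[0, B] = 1.
Proof. by rewrite /mixed_on /pr => ->. Qed.

Lemma mixed_out {R : realType} {B : R} {P : probability R R} {S : set R} :
  mixed_on B P -> measurable S -> S `&` `[0, B] = set0 -> pr P S = 0.
Proof.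
move=> hP mS hS.
have mI : measurable `[0, B] by exact: measurable_itv.
have sub : S `<=` ~` `[0, B].
  by move=> y Sy K; have : (S `&` `[0, B]) y by []; rewrite hS.
have := pr_le P mS (measurableC mI) sub.
rewrite prC ?mixed_pr // subrr => h.
by apply/le_anti; rewrite h pr_ge0.
Qed.

Lemma mixed_in {R : realType} {B : R} {P : probability R R} {S : set R} :
  mixed_on B P -> measurable S -> pr P (S `&` `[0, B]) = pr P S.
Proof.
move=> hP mS.
have mI : measurable `[0, B] by exact: measurable_itv.
have E : S = (S `&` `[0, B]) `|` (S `&` ~` `[0, B]).
  by rewrite -setIUr setUCr setIT.
have h0 : pr P (S `&` ~` `[0, B]) = 0.
  apply: (mixed_out hP); first exact: measurableI (measurableC _).
  by rewrite -setIA setICl setI0.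
rewrite [in RHS]E prU ?h0 ?addr0 //.
- exact: measurableI.
- exact: measurableI (measurableC _).
- by rewrite setIACA setICr setI0.
Qed.

Definition qlt {R : realType} (P : probability R R) (x : R) := pr P `]-oo, x[.
Definition qgt {R : realType} (P : probability R R) (x : R) := pr P `]x, +oo[.

Lemma mitv {R : realType} (i : interval R) : measurable [set` i].
Proof. exact: measurable_itv. Qed.
#[global] Hint Resolve mitv : core.

Lemma setC_lt {R : realType} (x : R) : ~` `]-oo, x[ = `[x, +oo[%classic.
Proof. apply/seteqP; split => y /=; rewrite !in_itv /= ?andbT; [move/negP; rewrite -leNgt //|rewrite leNgt; exact/negP]. Qed.

Lemma setC_gt {R : realType} (x : R) : ~` `]x, +oo[ = `]-oo, x]%classic.
Proof. apply/seteqP; split => y /=; rewrite !in_itv /= ?andbT; [move/negP; rewrite -leNgt //|rewrite leNgt; exact/negP]. Qed.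

Lemma pr_ge {R : realType} (P : probability R R) x : pr P `[x, +oo[ = 1 - qlt P x.
Proof. by rewrite -setC_lt prC. Qed.

Lemma pr_le_itv {R : realType} (P : probability R R) x : pr P `]-oo, x] = 1 - qgt P x.
Proof. by rewrite -setC_gt prC. Qed.

Lemma pr_single {R : realType} (P : probability R R) x :
  pr P [set x] = 1 - qlt P x - qgt P x.
Proof.
have E : `]-oo, x]%classic = `]-oo, x[ `|` [set x].
  apply/seteqP; split => y /=; rewrite !in_itv /=.
    by rewrite le_eqVlt => /orP[/eqP ->|->]; [right|left].
  by case=> [/ltW //|->].
have := pr_le_itv P x; rewrite E prU //; last first.
  by apply/seteqP; split => y //= []; rewrite in_itv /= => + yx; rewrite yx ltxx.
move=> h; rewrite /qlt; lra.
Qed.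

Lemma qlt_ge0 {R : realType} (P : probability R R) x : 0 <= qlt P x.
Proof. exact: pr_ge0. Qed.
Lemma qgt_ge0 {R : realType} (P : probability R R) x : 0 <= qgt P x.
Proof. exact: pr_ge0. Qed.
Lemma qsum_le1 {R : realType} (P : probability R R) x : qlt P x + qgt P x <= 1.
Proof. have := pr_ge0 P (measurable_set1 x); rewrite pr_single; lra. Qed.

Definition tv {R : realType} (B v B' v' x : R) : R :=
  if (x == Lval B B' v v') && (Num.min B' v' < Num.min B v) then v - x
  else if (x == Lval B B' v v') && (Num.min B v < Num.min B' v') then - x
  else v / 2 - x.

Definition ur {R : realType} (B v B' v' : R) (Q : probability R R) (x : R) : R :=
  (v - x) * qlt Q x - x * qgt Q x + tv B v B' v' x * (1 - qlt Q x - qgt Q x).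

Lemma mem_itvS {R : realType} (i : interval R) y : (y \in [set` i]) = (y \in i).
Proof. by apply/idP/idP; rewrite in_setE. Qed.

Lemma payoff_split {R : realType} (B v B' v' x y : R) :
  payoff B v B' v' x y = (v - x) * \1_`]-oo, x[ y + (- x) * \1_`]x, +oo[ y
     + tv B v B' v' x * \1_[set x] y.
Proof.
rewrite /payoff /tv !indicE !mem_itvS !in_itv /= in_set1 andbT.
have [yx|xy|<-] := ltgtP y x.
- by rewrite /= mulr1 !mulr0 !addr0.
- by rewrite /= mulr1 !mulr0 add0r addr0.
- by rewrite /= !mulr0 !add0r mulr1.
Qed.

Lemma int_ci {R : realType} (Q : probability R R) (c : R) (A : set R) :
  measurable A -> (\int[Q]_y (c * \1_A y)%:E = (c * pr Q A)%:E)%E.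
Proof.
move=> mA; under eq_integral do rewrite EFinM.
rewrite integralZl //; last exact: integrable_indic.
by rewrite integral_indic // setIT EFinM /pr fineK // fin_num_measure.
Qed.

Lemma integrable_ci {R : realType} (Q : probability R R) (c : R) (A : set R) :
  measurable A -> Q.-integrable setT (fun y => (c * \1_A y)%:E).
Proof.
move=> mA; under eq_fun do rewrite EFinM.
by apply: integrableZl => //; exact: integrable_indic.
Qed.

Lemma int_payoff {R : realType} (Q : probability R R) (B v B' v' x : R) :
  (\int[Q]_y (payoff B v B' v' x y)%:E = (ur B v B' v' Q x)%:E)%E.
Proof.
under eq_integral do rewrite payoff_split !EFinD.
rewrite integralD; first last.
- exact: integrable_ci.
- apply: (@integrableD _ _ _ Q setT measurableT (fun y => ((v - x) * \1_`]-oo, x[ y)%:E) (fun y => ((- x) * \1_`]x, +oo[ y)%:E)); exact: integrable_ci.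
- exact: measurableT.
rewrite integralD; first last.
- by apply: integrable_ci.
- by apply: integrable_ci.
- exact: measurableT.
rewrite (int_ci Q (v - x) _ (mitv `]-oo, x[)) (int_ci Q (- x) _ (mitv `]x, +oo[)).
rewrite (int_ci Q _ _ (measurable_set1 x)).
rewrite pr_single /ur /qlt /qgt -!EFinD; congr (_%:E); ring.
Qed.

Lemma qlt_nd {R : realType} (P : probability R R) : {homo qlt P : x y / x <= y}.
Proof.
move=> x y xy; apply: pr_le => // z /=.
by rewrite !in_itv /= => /lt_le_trans; apply.
Qed.

Lemma qgt_ni {R : realType} (P : probability R R) : {homo qgt P : x y / x <= y >-> (x >= y)}.
Proof.
move=> x y xy; apply: pr_le => // z /=.
by rewrite !in_itv /= !andbT => /(le_lt_trans xy).
Qed.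

Lemma tvE {R : realType} (B v B' v' : R) :
  tv B v B' v' = fun x => (v / 2 - x) +
    (if Num.min B' v' < Num.min B v then v / 2
     else if Num.min B v < Num.min B' v' then - (v / 2) else 0) * \1_[set Lval B B' v v'] x.
Proof.
apply/funext => x; rewrite /tv indicE in_set1.
case: eqP => _ /=; last by rewrite mulr0 addr0.
rewrite mulr1; case: ifP => _; first by field.
by case: ifP => _; [field|rewrite addr0].
Qed.

Lemma ur_meas {R : realType} (B v B' v' : R) (Q : probability R R) :
  measurable_fun setT (ur B v B' v' Q).
Proof.
have mlt : measurable_fun setT (qlt Q).
  by apply: nondecreasing_measurable => //; exact: qlt_nd.
have mgt : measurable_fun setT (qgt Q).
  by apply: nonincreasing_measurable => //; exact: qgt_ni.
have mtv : measurable_fun setT (tv B v B' v').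
  rewrite tvE; apply: measurable_funD.
    by apply: measurable_funB => //; exact: measurable_cst.
  apply: measurable_funM; first exact: measurable_cst.
  exact: measurable_indic.
rewrite /ur; apply: measurable_funD; [apply: measurable_funB|].
- apply: measurable_funM => //; apply: measurable_funB => //; exact: measurable_cst.
- exact: measurable_funM.
- apply: measurable_funM => //; apply: measurable_funB => //.
  by apply: measurable_funB => //; exact: measurable_cst.
Qed.

Lemma int_ciD {R : realType} (Q : probability R R) (D : set R) (c : R) (A : set R) :
  measurable D -> measurable A ->
  (\int[Q]_(y in D) (c * \1_A y)%:E = (c * pr Q (A `&` D))%:E)%E.
Proof.
move=> mD mA; under eq_integral do rewrite EFinM.
rewrite integralZl //; last first.
  by apply: (integrableS measurableT) => //; exact: integrable_indic.
by rewrite integral_indic // EFinM /pr fineK // fin_num_measure //; exact: measurableI.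
Qed.

Lemma integrable_ciD {R : realType} (Q : probability R R) (D : set R) (c : R) (A : set R) :
  measurable D -> measurable A -> Q.-integrable D (fun y => (c * \1_A y)%:E).
Proof.
move=> mD mA; apply: (integrableS measurableT) => //; exact: integrable_ci.
Qed.

Lemma ur_le {R : realType} (B v B' v' : R) (Q : probability R R) x :
  0 <= v -> ur B v B' v' Q x <= v * (1 - qgt Q x) - x.
Proof.
move=> hv; have h1 := qlt_ge0 Q x; have h2 := qgt_ge0 Q x; have h3 := qsum_le1 Q x.
have htv : tv B v B' v' x <= v - x.
  rewrite /tv; case: ifP => _; first lra.
  case: ifP => _; lra.
rewrite /ur.
have : tv B v B' v' x * (1 - qlt Q x - qgt Q x) <= (v - x) * (1 - qlt Q x - qgt Q x).
  by apply: ler_wpM2r => //; lra.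
lra.
Qed.

Lemma ur_ge {R : realType} (B v B' v' : R) (Q : probability R R) x :
  0 <= v -> v * qlt Q x - x <= ur B v B' v' Q x.
Proof.
move=> hv; have h1 := qlt_ge0 Q x; have h2 := qgt_ge0 Q x; have h3 := qsum_le1 Q x.
have htv : - x <= tv B v B' v' x.
  rewrite /tv; case: ifP => _; first lra.
  case: ifP => _; lra.
rewrite /ur.
have : (- x) * (1 - qlt Q x - qgt Q x) <= tv B v B' v' x * (1 - qlt Q x - qgt Q x).
  by apply: ler_wpM2r => //; lra.
lra.
Qed.

Lemma ur_neqL {R : realType} (B v B' v' : R) (Q : probability R R) x :
  x != Lval B B' v v' ->
  ur B v B' v' Q x = v * qlt Q x + v / 2 * (1 - qlt Q x - qgt Q x) - x.
Proof.
move=> /negbTE hx; rewrite /ur /tv hx /=; ring.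
Qed.

Definition br {R : realType} (B v B' v' : R) (F Q : probability R R) :=
  forall G : probability R R, mixed_on B G ->
    (exp_util B v B' v' G Q <= exp_util B v B' v' F Q)%E.

Lemma util_E {R : realType} (B v B' v' : R) (G Q : probability R R) :
  exp_util B v B' v' G Q = (\int[G]_x (ur B v B' v' Q x)%:E)%E.
Proof. by apply: eq_integral => x _; rewrite int_payoff. Qed.

Lemma dev {R : realType} (B v B' v' : R) (F Q : probability R R) (x : R) :
  br B v B' v' F Q -> 0 <= x <= B ->
  ((ur B v B' v' Q x)%:E <= exp_util B v B' v' F Q)%E.
Proof.
move=> hbr hx.
have hG : mixed_on B (@dirac _ R x R : probability R R).
  by rewrite /mixed_on -[LHS]/(@dirac _ R x R `[0, B]) diracE mem_set //= in_itv /= hx.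
have := hbr _ hG; rewrite util_E integral_dirac //; last first.
  by apply/measurable_EFinP; exact: ur_meas.
by rewrite diracT mul1e.
Qed.

Lemma ur_int {R : realType} (B v B' v' : R) (F Q : probability R R) :
  0 < v -> F.-integrable `[0, B] (fun x => (ur B v B' v' Q x)%:E).
Proof.
move=> hv.
apply: (@le_integrable _ _ _ F _ (mitv _) _ (fun _ => (v + `|B|)%:E)).
- by apply/measurable_EFinP; apply: (measurable_funS measurableT) => //; exact: ur_meas.
- move=> x /=; rewrite in_itv /= => /andP[x0 xB].
  rewrite !lee_fin.
  have h1 := ur_le B v B' v' Q x (ltW hv); have h2 := ur_ge B v B' v' Q x (ltW hv).
  have h3 := qlt_ge0 Q x; have h4 := qgt_ge0 Q x.
  have h5 : 0 <= v * qlt Q x by apply: mulr_ge0; lra.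
  have h6 : 0 <= v * qgt Q x by apply: mulr_ge0; lra.
  have hB : B <= `|B| by exact: ler_norm.
  rewrite [X in _ <= X]ger0_norm; last lra.
  rewrite ler_norml; apply/andP; split; lra.
- exact: finite_measure_integrable_cst.
Qed.

Lemma U_int {R : realType} (B v B' v' : R) (F Q : probability R R) :
  mixed_on B F ->
  exp_util B v B' v' F Q = (\int[F]_(x in `[0%R, B]%classic) (ur B v B' v' Q x)%:E)%E.
Proof.
move=> hF; rewrite util_E [RHS]integral_mkcond.
apply: ae_eq_integral => //.
- by apply/measurable_EFinP; exact: ur_meas.
- apply/measurable_restrict => //; rewrite setTI.
  by apply/measurable_EFinP; apply: (measurable_funS measurableT) => //; exact: ur_meas.
- exists (~` `[0, B]%classic); split => //; first exact: measurableC.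
    have h := @probability_setC _ _ _ F _ (mitv `[0, B]).
    move: h; rewrite hF subee; exact.
  move=> y /= /not_implyP [_ h]; apply: contra_not h => hy.
  by rewrite patchE mem_set.
Qed.

Lemma U_fin {R : realType} (B v B' v' : R) (F Q : probability R R) :
  0 < v -> mixed_on B F ->
  exp_util B v B' v' F Q = (fine (exp_util B v B' v' F Q))%:E.
Proof.
move=> hv hF; rewrite fineK // U_int //; apply: integrable_fin_num => //.
exact: ur_int.
Qed.

Lemma ae_zero {R : realType} (B v B' v' : R) (F Q : probability R R) (A : set R) (c : R) :
  0 < v -> 0 <= B -> mixed_on B F -> br B v B' v' F Q -> measurable A ->
  A `<=` `[0, B] -> (forall x, A x -> ur B v B' v' Q x <= c) ->
  c < fine (exp_util B v B' v' F Q) -> pr F A = 0.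
Proof.
move=> hv hB hF hbr mA AK hAc hcU.
set Ur := fine (exp_util B v B' v' F Q).
have hUr : exp_util B v B' v' F Q = Ur%:E by rewrite /Ur -U_fin.
have mK : measurable `[0, B]%classic := mitv _.
have hint : (\int[F]_(x in `[0%R, B]%classic) (Ur + (c - Ur) * \1_A x)%:E
    = (Ur + (c - Ur) * pr F A)%:E)%E.
  under eq_integral do rewrite EFinD.
  rewrite integralD //; first last.
  - exact: integrable_ciD.
  - exact: finite_measure_integrable_cst.
  rewrite int_ciD // integral_cst // (setIidl AK).
  rewrite [X in (_ * X)%E](_ : _ = 1%E); last exact: hF.
  by rewrite mule1 -EFinD.
have hle : (exp_util B v B' v' F Q <=
    \int[F]_(x in `[0%R, B]%classic) (Ur + (c - Ur) * \1_A x)%:E)%E.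
  rewrite U_int //; apply: le_integral => //.
  - exact: ur_int.
  - apply: (@integrableD _ _ _ F _ mK (fun x => Ur%:E) (fun x => ((c - Ur) * \1_A x)%:E)).
    + exact: finite_measure_integrable_cst.
    + exact: integrable_ciD.
  move=> x; rewrite inE /= in_itv /= => hx.
  rewrite lee_fin indicE.
  have [Ax|nAx] := boolP (x \in A).
    by rewrite mulr1; have := hAc x (set_mem Ax); lra.
  rewrite mulr0 addr0 -lee_fin -hUr; exact: dev.
move: hle; rewrite hint hUr lee_fin => h.
have h0 := pr_ge0 F mA.
apply/le_anti; rewrite h0 andbT.
have : 0 <= (c - Ur) * pr F A by lra.
move=> hp; rewrite -/Ur in hcU; nra.
Qed.

Lemma up_bound {R : realType} (P : probability R R) (F : nat -> set R) (k : R) :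
  (forall n, measurable (F n)) -> {homo F : n m / (n <= m)%N >-> (n `<=` m)} ->
  (forall n, pr P (F n) <= k) -> pr P (\bigcup_n F n) <= k.
Proof.
move=> mF nd hk.
have mU : measurable (\bigcup_n F n) by exact: bigcupT_measurable.
have nd' : {homo F : n m / (n <= m)%N >-> (n <= m)%O} by move=> n m nm; apply/subsetPset; exact: nd.
have h := @nondecreasing_cvg_mu _ _ _ P F mF mU nd'.
rewrite -lee_fin /pr fineK; last exact: fin_num_measure.
rewrite -(cvg_lim _ h) //; apply: lime_le; first exact: (cvgP _ h).
near=> n; rewrite /= -(fineK (fin_num_measure P _ (mF n))) lee_fin; exact: hk.
Unshelve. all: by end_near.
Qed.

Definition Zhi {R : realType} (P : probability R R) := [set a : R | qgt P a = 0].
Definition thi {R : realType} (P : probability R R) := inf (Zhi P).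

Lemma Zhi_B {R : realType} {B : R} {P : probability R R} :
  mixed_on B P -> Zhi P B.
Proof.
move=> hP; rewrite /Zhi /= /qgt; apply: (mixed_out hP) => //.
apply/seteqP; split => y //= [] /[!in_itv] /=; rewrite andbT => + /andP[_]; lra.
Qed.

Lemma Zhi_ge0 {R : realType} {B : R} {P : probability R R} :
  0 <= B -> mixed_on B P -> lbound (Zhi P) 0.
Proof.
move=> hB hP a; rewrite /Zhi /= => ha; rewrite leNgt; apply/negP => a0.
have := pr_le P (mitv `[0, B]) (mitv `]a, +oo[).
rewrite mixed_pr // -/(qgt P a) ha => h.
suff : (1:R) <= 0 by lra.
apply: h => y /=; rewrite !in_itv /= andbT => /andP[y0 _]; lra.
Qed.

Lemma thi_prop {R : realType} {B : R} {P : probability R R} :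
  0 <= B -> mixed_on B P ->
  [/\ 0 <= thi P <= B,
      (forall x, thi P < x -> pr P `[x, +oo[ = 0) &
      (forall a, a < thi P -> 0 < qgt P a)].
Proof.
move=> hB hP.
have ne : Zhi P !=set0 by exists B; exact: Zhi_B hP.
have hl : has_lbound (Zhi P) by exists 0; exact: Zhi_ge0 hP.
split.
- apply/andP; split; first exact: lb_le_inf ne (Zhi_ge0 hB hP).
  exact: ge_inf hl _ (Zhi_B hP).
- move=> x /(inf_lt ne) [z Zz zx].
  apply/le_anti; rewrite pr_ge0 // andbT -Zz.
  apply: pr_le => // y /=; rewrite !in_itv /= !andbT; lra.
- move=> a at_; have := qgt_ge0 P a; rewrite le_eqVlt => /orP[/eqP h|//].
  have : thi P <= a by apply: ge_inf hl _ _; rewrite /Zhi /= -h.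
  lra.
Qed.

Lemma ball_itv {R : realType} (x e : R) :
  [set y : R | x - e < y < x + e] = `]x - e, x + e[%classic.
Proof. by apply/seteqP; split => y /=; rewrite in_itv. Qed.

Lemma sup_supp {R : realType} (B : R) (P : probability R R) :
  0 <= B -> mixed_on B P -> sup (supp P) = thi P.
Proof.
move=> hB hP; set t := thi P; have [ht hge hgt] := thi_prop hB hP.
have ub : ubound (supp P) t.
  move=> y Sy; rewrite leNgt; apply/negP => ty.
  have e0 : 0 < (y - t) / 2 by lra.
  have := Sy _ e0.
  rewrite ball_itv prE // lte_fin.
  have := pr_le P (mitv `]y - (y - t) / 2, y + (y - t) / 2[) (mitv `[(t + y) / 2, +oo[).
  rewrite hge; last lra.
  move=> h; suff : pr P `]y - (y - t) / 2, y + (y - t) / 2[ <= 0 by lra.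
  apply: h => z /=; rewrite !in_itv /= andbT => /andP[h1 _]; lra.
have tin : supp P t.
  move=> e e0; rewrite ball_itv prE // lte_fin.
  have h0 := pr_ge0 P (mitv `]t - e, t + e[).
  rewrite lt_neqAle h0 andbT; apply/negP => /eqP h.
  have te : t - e < t by lra.
  have := hgt _ te.
  have E : `]t - e, +oo[%classic = `]t - e, t + e[ `|` `[t + e, +oo[.
    apply/seteqP; split => y /=; rewrite !in_itv /= ?andbT.
      by move=> ty; case: (ltP y (t + e)) => h1; [left; apply/andP|right].
    by case=> [/andP[] //|h1]; lra.
  rewrite /qgt E prU //; last first.
    apply/seteqP; split => y //= []; rewrite !in_itv /= andbT => /andP[_]; lra.
  rewrite -h hge; lra.
apply/le_anti/andP; split.
- by apply: ge_sup => //; exists t.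
- by apply: ub_le_sup => //; exists t.
Qed.

Lemma inv_nd {R : realType} {n m : nat} : (n <= m)%N -> (m.+1%:R : R)^-1 <= (n.+1%:R)^-1.
Proof. by move=> nm; rewrite lef_pV2 ?posrE ?ltr0Sn // ler_nat ltnS. Qed.

Lemma inv_pos {R : realType} (n : nat) : 0 < (n.+1%:R : R)^-1.
Proof. by rewrite invr_gt0 ltr0Sn. Qed.

Definition Zlo {R : realType} (P : probability R R) := [set a : R | qlt P a = 0].
Definition slo {R : realType} (P : probability R R) := sup (Zlo P).

Lemma slo_prop {R : realType} {B : R} {P : probability R R} :
  0 <= B -> mixed_on B P ->
  [/\ 0 <= slo P <= B, qlt P (slo P) = 0 &
      (forall b, slo P < b -> 0 < qlt P b)].
Proof.
move=> hB hP.
have Z0 : Zlo P 0.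
  rewrite /Zlo /= /qlt; apply: (mixed_out hP) => //.
  apply/seteqP; split => y //= [] /[!in_itv] /= => + /andP[+ _]; lra.
have ubB : ubound (Zlo P) B.
  move=> a; rewrite /Zlo /= => ha; rewrite leNgt; apply/negP => aB.
  have := pr_le P (mitv `[0, B]) (mitv `]-oo, a[).
  rewrite mixed_pr // -/(qlt P a) ha => h.
  suff : (1:R) <= 0 by lra.
  apply: h => y /=; rewrite !in_itv /= => /andP[_ yB]; lra.
have ne : Zlo P !=set0 by exists 0.
have hu : has_ubound (Zlo P) by exists B.
have hs : has_sup (Zlo P) by [].
split.
- apply/andP; split; first exact: ub_le_sup hu _ Z0.
  exact: ge_sup ne ubB.
- set s := slo P.
  have E : `]-oo, s[%classic = \bigcup_n `]-oo, s - (n.+1%:R)^-1[%classic.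
    apply/seteqP; split => y /=; rewrite !in_itv /=.
      move=> /ltr_add_invr [k hk]; exists k => //=; rewrite in_itv /=; move: hk; set q := _^-1; lra.
    case=> n _ /=; rewrite in_itv /= => h; have := inv_pos (R:=R) n; move: h; set q := _^-1; lra.
  apply/le_anti; rewrite qlt_ge0 andbT /qlt E.
  apply: up_bound => //.
    move=> n m nm y /=; rewrite !in_itv /=; have := inv_nd (R:=R) nm; set q1 := _^-1; set q2 := _^-1; lra.
  move=> n.
  have : s - (n.+1%:R)^-1 < sup (Zlo P) by have := inv_pos (R:=R) n; rewrite -/(slo P) -/s; set q := _^-1; lra.
  move=> /(sup_gt ne) [z Zz hz].
  have := pr_le P (mitv `]-oo, s - (n.+1%:R)^-1[) (mitv `]-oo, z[).
  rewrite -/(qlt P z) Zz; apply => y /=; rewrite !in_itv /=; move: hz; set q := _^-1; lra.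
- move=> b sb; have := qlt_ge0 P b; rewrite le_eqVlt => /orP[/eqP h|//].
  have : b <= slo P by apply: ub_le_sup hu _ _; rewrite /Zlo /= -h.
  lra.
Qed.
Lemma Ur_dev {R : realType} (B v B' v' : R) (F Q : probability R R) (x : R) :
  0 < v -> mixed_on B F -> br B v B' v' F Q -> 0 <= x <= B ->
  ur B v B' v' Q x <= fine (exp_util B v B' v' F Q).
Proof.
move=> hv hF hbr hx; rewrite -lee_fin -U_fin //; exact: dev.
Qed.

Lemma Ur_ge0 {R : realType} {B v B' v' : R} {F Q : probability R R} :
  0 < v -> 0 <= B -> mixed_on B F -> br B v B' v' F Q ->
  0 <= fine (exp_util B v B' v' F Q).
Proof.
move=> hv hB hF hbr.
have h0 : (0:R) <= 0 <= B by rewrite lexx hB.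
have := Ur_dev B v B' v' F Q 0 hv hF hbr h0.
have := ur_ge B v B' v' Q 0 (ltW hv); have := qlt_ge0 Q 0.
move=> h1 h2 h3; have : 0 <= v * qlt Q 0 by apply: mulr_ge0; lra.
lra.
Qed.

Lemma step1 {R : realType} (B v B' v' : R) (F Q : probability R R) :
  0 < v -> 0 <= B -> mixed_on B F -> br B v B' v' F Q -> thi F <= v.
Proof.
move=> hv hB hF hbr; have [ht hge hgt] := thi_prop hB hF.
rewrite leNgt; apply/negP => vt.
set a := (v + thi F) / 2.
have at_ : a < thi F by rewrite /a; lra.
have := hgt a at_; rewrite /qgt -(mixed_in hF) //.
rewrite (ae_zero _ _ _ _ _ _ _ (v - a) hv hB hF hbr) ?ltxx //.
- exact: measurableI.
- move=> x [] /=; rewrite in_itv /= andbT => ax _.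
  have := ur_le B v B' v' Q x (ltW hv); have := qgt_ge0 Q x.
  move=> h1 h2; have : v * qgt Q x >= 0 by apply: mulr_ge0; lra.
  lra.
- have := Ur_ge0 hv hB hF hbr; rewrite /a; lra.
Qed.

Lemma step2 {R : realType} {B v B' v' : R} {F Q : probability R R} :
  0 < v -> 0 <= B -> 0 <= B' -> mixed_on B F -> mixed_on B' Q ->
  br B v B' v' F Q -> thi F <= thi Q.
Proof.
move=> hv hB hB' hF hQ hbr; have [ht hge hgt] := thi_prop hB hF.
have [ht' hge' hgt'] := thi_prop hB' hQ.
rewrite leNgt; apply/negP => tt.
set m := (thi F + thi Q) / 2.
have hm : 0 <= m <= B by rewrite /m; apply/andP; split; lra.
have q1 : qlt Q m = 1.
  have hm' : thi Q < m by rewrite /m; lra.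
  have := hge' m hm'.
  by rewrite pr_ge; lra.
have hU : v - m <= fine (exp_util B v B' v' F Q).
  have := Ur_dev B v B' v' F Q m hv hF hbr hm.
  have := ur_ge B v B' v' Q m (ltW hv); rewrite q1 mulr1; lra.
set m' := (m + thi F) / 2.
have mt : m' < thi F by rewrite /m' /m; lra.
have := hgt m' mt; rewrite /qgt -(mixed_in hF) //.
rewrite (ae_zero _ _ _ _ _ _ _ (v - m') hv hB hF hbr) ?ltxx //.
- exact: measurableI.
- move=> x [] /=; rewrite in_itv /= andbT => ax _.
  have := ur_le B v B' v' Q x (ltW hv); have := qgt_ge0 Q x.
  move=> h1 h2; have : v * qgt Q x >= 0 by apply: mulr_ge0; lra.
  lra.
- rewrite /m' /m in hU *; lra.
Qed.

Lemma Lval_le {R : realType} (B B' v v' : R) :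
  [/\ Lval B B' v v' <= B, Lval B B' v v' <= B', Lval B B' v v' <= v &
      Lval B B' v v' <= v'].
Proof.
rewrite /Lval; split; rewrite !ge_min lexx ?orbT //.
Qed.

Lemma Lval_sym {R : realType} (B B' v v' : R) : Lval B' B v' v = Lval B B' v v'.
Proof. by rewrite /Lval [Num.min B' B]minC [Num.min v' v]minC. Qed.

Lemma Upos {R : realType} {B v B' v' : R} {F Q : probability R R} :
  0 < v -> 0 <= B -> 0 <= B' -> mixed_on B F -> mixed_on B' Q ->
  br B v B' v' F Q -> thi Q < Lval B B' v v' ->
  0 < fine (exp_util B v B' v' F Q).
Proof.
move=> hv hB hB' hF hQ hbr tL.
have [ht' hge' hgt'] := thi_prop hB' hQ.
have [L1 L2 L3 L4] := Lval_le B B' v v'.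
set x0 := (thi Q + Lval B B' v v') / 2.
have hx : 0 <= x0 <= B by rewrite /x0; apply/andP; split; lra.
have q1 : qlt Q x0 = 1.
  have hm' : thi Q < x0 by rewrite /x0; lra.
  have := hge' x0 hm'.
  by rewrite pr_ge; lra.
have := Ur_dev B v B' v' F Q x0 hv hF hbr hx.
have := ur_ge B v B' v' Q x0 (ltW hv); rewrite q1 mulr1.
rewrite /x0 in hx *; lra.
Qed.

Lemma G1 {R : realType} {B v B' v' : R} {F Q : probability R R} (b : R) :
  0 < v -> 0 <= B -> mixed_on B F -> br B v B' v' F Q ->
  0 < qlt F b -> fine (exp_util B v B' v' F Q) <= v * qlt Q b.
Proof.
move=> hv hB hF hbr hb; rewrite leNgt; apply/negP => hlt.
move: hb; rewrite /qlt -(mixed_in hF) //.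
rewrite (ae_zero _ _ _ _ _ _ _ (v * qlt Q b) hv hB hF hbr) ?ltxx //.
- exact: measurableI.
- move=> x [] /=; rewrite !in_itv /= => xb /andP[x0 _].
  have := ur_le B v B' v' Q x (ltW hv).
  have : 1 - qgt Q x <= qlt Q b.
    rewrite -pr_le_itv; apply: pr_le => // y /=; rewrite !in_itv /=; lra.
  move=> h1 h2; have : v * (1 - qgt Q x) <= v * qlt Q b by apply: ler_wpM2l; lra.
  lra.
Qed.

Lemma atom {R : realType} {B v B' v' : R} {F Q : probability R R} (s : R) :
  0 < v -> 0 <= B -> mixed_on B F -> br B v B' v' F Q ->
  (forall b, s < b -> 0 < qlt F b) ->
  fine (exp_util B v B' v' F Q) <= v * (1 - qgt Q s).
Proof.
move=> hv hB hF hbr hs.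
set U := fine (exp_util B v B' v' F Q).
set w := U / v.
have Uw : U = v * w by rewrite /w; field; lra.
suff : qgt Q s <= 1 - w.
  by move=> h; rewrite Uw ler_pM2l //; lra.
have E : `]s, +oo[%classic = \bigcup_n `[s + (n.+1%:R)^-1, +oo[%classic.
  apply/seteqP; split => y /=; rewrite !in_itv /= ?andbT.
    move=> /ltr_add_invr [k hk]; exists k => //=; rewrite in_itv /= andbT.
    by move: hk; set q := _^-1; lra.
  case=> n _ /=; rewrite in_itv /= andbT => h; have := inv_pos (R:=R) n.
  by move: h; set q := _^-1; lra.
rewrite /qgt E; apply: up_bound => //.
  move=> n m nm y /=; rewrite !in_itv /= !andbT; have := inv_nd (R:=R) nm.
  by set q1 := _^-1; set q2 := _^-1; lra.
move=> n; rewrite pr_ge.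
have hb : s < s + (n.+1%:R)^-1 by have := inv_pos (R:=R) n; set q := _^-1; lra.
have := G1 _ hv hB hF hbr (hs _ hb); rewrite -/U Uw ler_pM2l //; lra.
Qed.

Lemma final_contra {R : realType} {B v B' v' : R} {F Q : probability R R} (s : R) :
  0 < v -> 0 <= B -> mixed_on B F -> br B v B' v' F Q ->
  0 <= s -> s < Lval B B' v v' -> qlt Q s = 0 -> 0 < 1 - qgt Q s ->
  0 < pr F [set s] -> False.
Proof.
move=> hv hB hF hbr s0 sL hlt hq hF1.
have [L1 L2 L3 L4] := Lval_le B B' v v'.
set L := Lval B B' v v' in sL L1 L2 L3 L4.
set q := 1 - qgt Q s in hq.
have hus : ur B v B' v' Q s = v / 2 * q - s.
  rewrite ur_neqL; last by rewrite lt_eqF.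
  by rewrite hlt /q; ring.
set eta := Num.min (v * q / 4) ((L - s) / 2).
have e0 : 0 < eta by rewrite /eta lt_min; apply/andP; split;
  [apply: divr_gt0; [exact: mulr_gt0|lra]|lra].
have e1 : eta <= v * q / 4 by rewrite /eta ge_min lexx.
have e2 : eta <= (L - s) / 2 by rewrite /eta ge_min lexx orbT.
have hx : 0 <= s + eta <= B by apply/andP; split; lra.
have hqx : q <= qlt Q (s + eta).
  rewrite /q -pr_le_itv; apply: pr_le => // y /=; rewrite !in_itv /=; lra.
have hux := ur_ge B v B' v' Q (s + eta) (ltW hv).
have hU := Ur_dev B v B' v' F Q (s + eta) hv hF hbr hx.
have hvq : v * q <= v * qlt Q (s + eta) by apply: ler_wpM2l; lra.
have hvq0 : 0 < v * q by exact: mulr_gt0.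
have := ae_zero _ _ _ _ _ _ [set s] (ur B v B' v' Q s) hv hB hF hbr (measurable_set1 s).
rewrite hus; move=> h; suff : pr F [set s] = 0 by lra.
apply: h.
- by move=> y /= ->; rewrite in_itv /=; apply/andP; split; lra.
- by move=> y /= ->; rewrite hus.
- lra.
Qed.

Theorem lemma2 (R : realType) (B1 B2 v1 v2 : R)
  (hB1 : 0 <= B1) (hB2 : 0 <= B2) (hv1 : 0 < v1) (hv2 : 0 < v2)
  (F1 F2 : probability R R) :
  nash_eq B1 B2 v1 v2 F1 F2 ->
  sup (supp F1) = Lval B1 B2 v1 v2 /\ sup (supp F2) = Lval B1 B2 v1 v2.
Proof.
case=> hF1 hF2 hbr1 hbr2.
have br1 : br B1 v1 B2 v2 F1 F2 by [].
have br2 : br B2 v2 B1 v1 F2 F1 by [].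
rewrite (sup_supp B1 F1 hB1 hF1) (sup_supp B2 F2 hB2 hF2).
have [ht1 hge1 hgt1] := thi_prop hB1 hF1.
have [ht2 hge2 hgt2] := thi_prop hB2 hF2.
have s11 := step1 B1 v1 B2 v2 F1 F2 hv1 hB1 hF1 br1.
have s12 := step1 B2 v2 B1 v1 F2 F1 hv2 hB2 hF2 br2.
have s21 := step2 hv1 hB1 hB2 hF1 hF2 br1.
have s22 := step2 hv2 hB2 hB1 hF2 hF1 br2.
have te : thi F1 = thi F2 by apply/le_anti; rewrite s21 s22.
have [L1 L2 L3 L4] := Lval_le B1 B2 v1 v2.
have tL : thi F1 <= Lval B1 B2 v1 v2.
  rewrite /Lval !le_min; apply/andP; split; apply/andP; split; lra.
suff : ~ thi F1 < Lval B1 B2 v1 v2.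
  by move=> h; split; rewrite -?te; apply/le_anti; rewrite tL leNgt; apply/negP.
move=> tlt.
have t2lt : thi F2 < Lval B1 B2 v1 v2 by rewrite -te.
have t1lt : thi F1 < Lval B2 B1 v2 v1 by rewrite Lval_sym.
have U1 := Upos hv1 hB1 hB2 hF1 hF2 br1 t2lt.
have U2 := Upos hv2 hB2 hB1 hF2 hF1 br2 t1lt.
have EZ : Zlo F1 = Zlo F2.
  apply/seteqP; split => a; rewrite /Zlo /= => ha.
  - have := qlt_ge0 F2 a; rewrite le_eqVlt => /orP[/eqP -> //|h].
    have := G1 a hv2 hB2 hF2 br2 h; rewrite ha mulr0; lra.
  - have := qlt_ge0 F1 a; rewrite le_eqVlt => /orP[/eqP -> //|h].
    have := G1 a hv1 hB1 hF1 br1 h; rewrite ha mulr0; lra.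
have [hs1 hl1 hb1] := slo_prop hB1 hF1.
have [hs2 hl2 hb2] := slo_prop hB2 hF2.
have se : slo F2 = slo F1 by rewrite /slo EZ.
rewrite se in hs2 hl2 hb2.
set s := slo F1 in hs1 hl1 hb1 hs2 hl2 hb2.
have a1 := atom s hv1 hB1 hF1 br1 hb1.
have a2 := atom s hv2 hB2 hF2 br2 hb2.
have q2 : 0 < 1 - qgt F2 s.
  have : 0 < v1 * (1 - qgt F2 s) by lra.
  by rewrite pmulr_rgt0.
have q1 : 0 < 1 - qgt F1 s.
  have : 0 < v2 * (1 - qgt F1 s) by lra.
  by rewrite pmulr_rgt0.
have p1 : 0 < pr F1 [set s] by rewrite pr_single hl1; lra.
have sL : s <= thi F1.
  rewrite leNgt; apply/negP => ts.
  have := pr_le F1 (measurable_set1 s) (mitv `[s, +oo[).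
  rewrite hge1 //; last first.
  move=> h; suff : pr F1 [set s] <= 0 by lra.
  by apply: h => y /= ->; rewrite in_itv /= lexx.
apply: (final_contra s hv1 hB1 hF1 br1) => //.
- by case/andP: hs1.
- lra.
Qed.
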